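(* Let $X$ be a real Banach lattice which is convex-transitive and such that every surjective linear isometry $T: X\to X$ is disjointness-preserving. If there exists an atom $x\in S_X$, then $X$ is one-dimensional.
   Context: $X$ is convex-transitive if $\overline{\mathrm{conv}}(\{T(y):T\in\mathcal{G}_X\})=B_X$ for every $y\in S_X$, where $\mathcal{G}_X$ is the group of surjective linear isometries of $X$. Elements $x,y$ are disjoint if $|x|\wedge|y|=0$; $T$ is disjointness-preserving if $T(x),T(y)$ are disjoint whenever $x,y$ are. A point $a\neq0$ is an atom if $\{v\in X: 0\le v\le|a|\}=\{\lambda|a|: 0\le\lambda\le1\}$. *)

(* Defs.v *)
From Stdlib Require Import Reals List.
Open Scope R_scope.

Record BanachLattice := {
  BL :> Type;
  zero : BL;
  add : BL -> BL -> BL;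
  opp : BL -> BL;
  scal : R -> BL -> BL;
  norm : BL -> R;
  le : BL -> BL -> Prop;
  join : BL -> BL -> BL;
  meet : BL -> BL -> BL;
  add_assoc : forall x y z, add x (add y z) = add (add x y) z;
  add_comm : forall x y, add x y = add y x;
  add_zero_l : forall x, add zero x = x;
  add_opp_r : forall x, add x (opp x) = zero;
  scal_assoc : forall a b x, scal a (scal b x) = scal (a * b) x;
  scal_one : forall x, scal 1 x = x;
  scal_add_distr_l : forall a x y, scal a (add x y) = add (scal a x) (scal a y);
  scal_add_distr_r : forall a b x, scal (a + b) x = add (scal a x) (scal b x);
  norm_zero_iff : forall x, norm x = 0 <-> x = zero;
  norm_triangle : forall x y, norm (add x y) <= norm x + norm y;
  norm_scal : forall a x, norm (scal a x) = Rabs a * norm x;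
  norm_complete : forall u : nat -> BL,
    (forall eps, eps > 0 -> exists N, forall m n, (m >= N)%nat -> (n >= N)%nat ->
        norm (add (u m) (opp (u n))) < eps) ->
    exists l, forall eps, eps > 0 -> exists N, forall n, (n >= N)%nat ->
        norm (add (u n) (opp l)) < eps;
  le_refl : forall x, le x x;
  le_trans : forall x y z, le x y -> le y z -> le x z;
  le_antisym : forall x y, le x y -> le y x -> x = y;
  le_add : forall x y z, le x y -> le (add x z) (add y z);
  le_scal : forall a x y, 0 <= a -> le x y -> le (scal a x) (scal a y);
  join_ub_l : forall x y, le x (join x y);
  join_ub_r : forall x y, le y (join x y);
  join_lub : forall x y z, le x z -> le y z -> le (join x y) z;
  meet_lb_l : forall x y, le (meet x y) x;
  meet_lb_r : forall x y, le (meet x y) y;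
  meet_glb : forall x y z, le z x -> le z y -> le z (meet x y);
  norm_mono : forall x y, le (join x (opp x)) (join y (opp y)) -> norm x <= norm y
}.

Arguments zero {b0}.
Arguments add {b0}.
Arguments opp {b0}.
Arguments scal {b0}.
Arguments norm {b0}.
Arguments le {b0}.
Arguments join {b0}.
Arguments meet {b0}.

Section Defs.
Variable X : BanachLattice.

Definition sub (x y : X) : X := add x (opp y).

Definition absv (x : X) : X := join x (opp x).

Definition is_linear (T : X -> X) : Prop :=
  (forall x y, T (add x y) = add (T x) (T y)) /\
  (forall a x, T (scal a x) = scal a (T x)).

Definition surj_lin_isometry (T : X -> X) : Prop :=
  is_linear T /\ (forall y, exists x, T x = y) /\ (forall x, norm (T x) = norm x).

Definition lin_comb (l : list (R * X)) : X :=
  fold_right (fun p acc => add (scal (fst p) (snd p)) acc) zero l.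

Definition conv (S : X -> Prop) (z : X) : Prop :=
  exists l : list (R * X),
    (forall p, In p l -> 0 <= fst p /\ S (snd p)) /\
    fold_right Rplus 0 (map fst l) = 1 /\
    z = lin_comb l.

Definition closure (S : X -> Prop) (z : X) : Prop :=
  forall eps, eps > 0 -> exists w, S w /\ norm (sub z w) < eps.

Definition convex_transitive : Prop :=
  forall y : X, norm y = 1 ->
    forall z : X,
      closure (conv (fun w => exists T, surj_lin_isometry T /\ w = T y)) z
      <-> norm z <= 1.

Definition disjoint (x y : X) : Prop := meet (absv x) (absv y) = zero.

Definition disjointness_preserving (T : X -> X) : Prop :=
  forall x y, disjoint x y -> disjoint (T x) (T y).

Definition atom (a : X) : Prop :=
  a <> zero /\
  forall v : X, (le zero v /\ le v (absv a)) <->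
                exists lam, 0 <= lam <= 1 /\ v = scal lam (absv a).

Definition one_dimensional : Prop :=
  exists e : X, e <> zero /\ forall x : X, exists lam, x = scal lam e.

End Defs.

(* Main.v *)
Require Import Defs.
From Stdlib Require Import Reals Lra List Classical ClassicalEpsilon.
Open Scope R_scope.

Arguments add_assoc {b0} x y z.
Arguments add_comm {b0} x y.
Arguments add_zero_l {b0} x.
Arguments add_opp_r {b0} x.
Arguments scal_assoc {b0} a b x.
Arguments scal_one {b0} x.
Arguments scal_add_distr_l {b0} a x y.
Arguments scal_add_distr_r {b0} a b x.
Arguments norm_zero_iff {b0} x.
Arguments norm_triangle {b0} x y.
Arguments norm_scal {b0} a x.
Arguments le_refl {b0} x.
Arguments le_trans {b0} x y z.
Arguments le_antisym {b0} x y.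
Arguments le_add {b0} x y z.
Arguments le_scal {b0} a x y.
Arguments join_ub_l {b0} x y.
Arguments join_ub_r {b0} x y.
Arguments join_lub {b0} x y z.
Arguments meet_lb_l {b0} x y.
Arguments meet_lb_r {b0} x y.
Arguments meet_glb {b0} x y z.
Arguments norm_mono {b0} x y.

Section L.
Context {X : BanachLattice}.
Local Notation ab := (absv X).
Implicit Types x y z u v w p q k e : X.

Lemma add_zero_r x : add x zero = x.
Proof. rewrite add_comm; apply add_zero_l. Qed.
Lemma add_opp_l x : add (opp x) x = zero.
Proof. rewrite add_comm; apply add_opp_r. Qed.
Lemma add_cancel_r x y z : add x z = add y z -> x = y.
Proof.
  intro H. rewrite <- (add_zero_r x), <- (add_zero_r y), <- (add_opp_r z),
    !add_assoc, H; reflexivity.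
Qed.
Lemma add_cancel_l x y z : add z x = add z y -> x = y.
Proof. rewrite (add_comm z x), (add_comm z y). apply add_cancel_r. Qed.
Lemma opp_uniq x y : add x y = zero -> y = opp x.
Proof. intro H. apply (add_cancel_l _ _ x). rewrite H, add_opp_r. reflexivity. Qed.
Lemma opp_opp x : opp (opp x) = x.
Proof. symmetry. apply opp_uniq. apply add_opp_l. Qed.
Lemma opp_zero : opp (zero : X) = zero.
Proof. symmetry; apply opp_uniq. apply add_zero_l. Qed.
Lemma scal_zero_l x : scal 0 x = zero.
Proof.
  apply (add_cancel_l _ _ (scal 0 x)). rewrite <- scal_add_distr_r, add_zero_r.
  f_equal; ring.
Qed.
Lemma scal_zero_r a : scal a (zero : X) = zero.
Proof.
  apply (add_cancel_l _ _ (scal a zero)). rewrite <- scal_add_distr_l, !add_zero_r.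
  reflexivity.
Qed.
Lemma scal_opp_l a x : scal (- a) x = opp (scal a x).
Proof. apply opp_uniq. rewrite <- scal_add_distr_r. replace (a + - a) with 0 by ring.
  apply scal_zero_l. Qed.
Lemma scal_m1 x : scal (-1) x = opp x.
Proof. replace (-1) with (- (1)) by ring. rewrite scal_opp_l, scal_one. reflexivity. Qed.
Lemma opp_add x y : opp (add x y) = add (opp x) (opp y).
Proof. rewrite <- !scal_m1. apply scal_add_distr_l. Qed.
Lemma scal_opp_r a x : scal a (opp x) = opp (scal a x).
Proof. rewrite <- !scal_m1, !scal_assoc. f_equal; ring. Qed.
Lemma add_sub x y : add (add x y) (opp y) = x.
Proof. rewrite <- add_assoc, add_opp_r, add_zero_r. reflexivity. Qed.
Lemma add_sub2 x y : add (add x (opp y)) y = x.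
Proof. rewrite <- add_assoc, add_opp_l, add_zero_r. reflexivity. Qed.
Lemma add_swap x y z : add x (add y z) = add y (add x z).
Proof. rewrite !add_assoc, (add_comm x y). reflexivity. Qed.
Lemma scal_inv_l t x : t <> 0 -> scal (/ t) (scal t x) = x.
Proof. intro H. rewrite scal_assoc, Rinv_l by exact H. apply scal_one. Qed.

Lemma scal_inv_r t x : t <> 0 -> scal t (scal (/ t) x) = x.
Proof. intro H. rewrite scal_assoc, Rinv_r by exact H. apply scal_one. Qed.
Lemma norm_opp x : norm (opp x) = norm x.
Proof. rewrite <- scal_m1, norm_scal. replace (Rabs (-1)) with 1. ring. rewrite Rabs_left by lra; ring. Qed.
Lemma norm_zero : norm (zero : X) = 0.
Proof. apply norm_zero_iff. reflexivity. Qed.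
Lemma norm_nonneg x : 0 <= norm x.
Proof. pose proof (norm_triangle x (opp x)). rewrite add_opp_r, norm_zero, norm_opp in H. lra. Qed.

Lemma le_add_r_iff x y z : le (add x z) (add y z) <-> le x y.
Proof. split; intro H.
  - pose proof (le_add _ _ (opp z) H). rewrite !add_sub in H0. exact H0.
  - apply le_add, H. Qed.
Lemma le_add_l x y z : le x y -> le (add z x) (add z y).
Proof. intro H. rewrite (add_comm z x), (add_comm z y). apply le_add, H. Qed.
Lemma le_add2 x y z w : le x y -> le z w -> le (add x z) (add y w).
Proof. intros H1 H2. apply le_trans with (add y z). apply le_add, H1. apply le_add_l, H2. Qed.
Lemma le_opp x y : le x y -> le (opp y) (opp x).
Proof. intro H. pose proof (le_add _ _ (add (opp x) (opp y)) H).
  rewrite (add_assoc x), add_opp_r, add_zero_l, (add_swap y), add_opp_r, add_zero_r in H0.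
  exact H0. Qed.
Lemma le_sub0 x y : le x y -> le zero (add y (opp x)).
Proof. intro H. rewrite <- (add_opp_r x). apply le_add, H. Qed.
Lemma le_sub0_inv x y : le zero (add y (opp x)) -> le x y.
Proof. intro H. apply (le_add _ _ x) in H. rewrite add_zero_l, add_sub2 in H. exact H. Qed.
Lemma le_scal_r x s t : le zero x -> s <= t -> le (scal s x) (scal t x).
Proof. intros H1 H2. apply le_sub0_inv. rewrite <- scal_opp_l, <- scal_add_distr_r.
  rewrite <- (scal_zero_r (t + - s)). apply le_scal. lra. exact H1. Qed.
Lemma le_scal_nonneg t x : 0 <= t -> le zero x -> le zero (scal t x).
Proof. intros. rewrite <- (scal_zero_r t). apply le_scal; auto. Qed.
Lemma le_scal_inv t x y : 0 < t -> le (scal t x) (scal t y) -> le x y.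
Proof. intros Ht H. apply (le_scal (/ t)) in H. rewrite !scal_inv_l in H by lra. exact H.
  left; apply Rinv_0_lt_compat, Ht. Qed.

Lemma join_comm x y : join x y = join y x.
Proof. apply le_antisym; apply join_lub; auto using join_ub_l, join_ub_r. Qed.
Lemma meet_comm x y : meet x y = meet y x.
Proof. apply le_antisym; apply meet_glb; auto using meet_lb_l, meet_lb_r. Qed.
Lemma join_of_le x y : le x y -> join x y = y.
Proof. intro H. apply le_antisym. apply join_lub; auto using le_refl. apply join_ub_r. Qed.
Lemma meet_of_le x y : le x y -> meet x y = x.
Proof. intro H. apply le_antisym. apply meet_lb_l. apply meet_glb; auto using le_refl. Qed.
Lemma meet_mono x y x' y' : le x x' -> le y y' -> le (meet x y) (meet x' y').
Proof. intros. apply meet_glb. apply le_trans with x; auto using meet_lb_l.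
  apply le_trans with y; auto using meet_lb_r. Qed.
Lemma join_add x y z : add (join x y) z = join (add x z) (add y z).
Proof. apply le_antisym.
  - set (J := join (add x z) (add y z)).
    assert (H : le (join x y) (add J (opp z))).
    { apply join_lub.
      + rewrite <- (add_sub x z). apply le_add. apply join_ub_l.
      + rewrite <- (add_sub y z). apply le_add. apply join_ub_r. }
    apply (le_add _ _ z) in H. rewrite add_sub2 in H. exact H.
  - apply join_lub; apply le_add; auto using join_ub_l, join_ub_r. Qed.
Lemma opp_join x y : opp (join x y) = meet (opp x) (opp y).
Proof. apply le_antisym.
  - apply meet_glb; apply le_opp; auto using join_ub_l, join_ub_r.
  - rewrite <- (opp_opp (meet _ _)). apply le_opp. apply join_lub.
    + rewrite <- (opp_opp x) at 1. apply le_opp, meet_lb_l.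
    + rewrite <- (opp_opp y) at 1. apply le_opp, meet_lb_r. Qed.
Lemma opp_meet x y : opp (meet x y) = join (opp x) (opp y).
Proof. rewrite <- (opp_opp x), <- (opp_opp y) at 1. rewrite <- opp_join, opp_opp. reflexivity. Qed.
Lemma meet_add x y z : add (meet x y) z = meet (add x z) (add y z).
Proof. rewrite <- (opp_opp (meet x y)), opp_meet.
  rewrite <- (opp_opp z) at 1. rewrite <- opp_add, join_add, opp_join, <- !opp_add, !opp_opp.
  reflexivity. Qed.
Lemma meet_add_l x y z : add z (meet x y) = meet (add z x) (add z y).
Proof. rewrite !(add_comm z). apply meet_add. Qed.
Lemma scal_meet t x y : 0 <= t -> scal t (meet x y) = meet (scal t x) (scal t y).
Proof. intro Ht. destruct (Req_dec t 0) as [->|Hn].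
  - rewrite !scal_zero_l. apply le_antisym. apply meet_glb; apply le_refl. apply meet_lb_l.
  - apply le_antisym.
    + apply meet_glb; apply le_scal; auto using meet_lb_l, meet_lb_r.
    + rewrite <- (scal_inv_r t (meet (scal t x) (scal t y))) by exact Hn.
      apply le_scal; auto. apply meet_glb.
      * apply (le_scal_inv t). lra. rewrite scal_inv_r by exact Hn. apply meet_lb_l.
      * apply (le_scal_inv t). lra. rewrite scal_inv_r by exact Hn. apply meet_lb_r.
Qed.
Lemma scal_join t x y : 0 <= t -> scal t (join x y) = join (scal t x) (scal t y).
Proof. intro Ht. rewrite <- (opp_opp (join x y)), opp_join, scal_opp_r, scal_meet by exact Ht.
  rewrite !scal_opp_r, opp_meet, !opp_opp. reflexivity. Qed.

Lemma abs_nonneg x : le zero (ab x).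
Proof. unfold absv. pose proof (le_add2 _ _ _ _ (join_ub_l x (opp x)) (join_ub_r x (opp x))).
  rewrite add_opp_r in H. rewrite <- (scal_one (join x (opp x))) in H.
  rewrite <- scal_add_distr_r in H. apply (le_scal_inv (1+1)). lra. rewrite scal_zero_r. exact H. Qed.
Lemma abs_of_nonneg x : le zero x -> ab x = x.
Proof. intro H. unfold absv. rewrite join_comm. apply join_of_le.
  apply le_trans with zero. rewrite <- opp_zero. apply le_opp, H. exact H. Qed.
Lemma abs_opp x : ab (opp x) = ab x.
Proof. unfold absv. rewrite opp_opp, join_comm. reflexivity. Qed.
Lemma abs_scal t x : ab (scal t x) = scal (Rabs t) (ab x).
Proof. destruct (Rle_dec 0 t) as [H|H].
  - rewrite Rabs_right by lra. unfold absv. rewrite scal_join, scal_opp_r by exact H. reflexivity.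
  - rewrite Rabs_left by lra.
    assert (Ht : scal t x = opp (scal (- t) x)) by (rewrite <- scal_opp_l; f_equal; ring).
    rewrite Ht, abs_opp. unfold absv. rewrite scal_join, scal_opp_r by lra. reflexivity. Qed.
Lemma abs_tri x y : le (ab (add x y)) (add (ab x) (ab y)).
Proof. unfold absv. apply join_lub. apply le_add2; apply join_ub_l.
  rewrite opp_add. apply le_add2; apply join_ub_r. Qed.
Lemma abs_abs x : ab (ab x) = ab x.
Proof. apply abs_of_nonneg, abs_nonneg. Qed.
Lemma norm_abs x : norm (ab x) = norm x.
Proof. apply Rle_antisym; apply norm_mono; fold (ab (ab x)); fold (ab x); rewrite abs_abs; apply le_refl. Qed.
Lemma abs_zero : ab zero = zero.
Proof. apply abs_of_nonneg, le_refl. Qed.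
Lemma abs_zero_inv x : ab x = zero -> x = zero.
Proof. intro H. apply norm_zero_iff. apply Rle_antisym. rewrite <- norm_zero. apply norm_mono.
  fold (ab x). fold (ab (zero:X)). rewrite H, abs_zero. apply le_refl. apply norm_nonneg. Qed.
Lemma le_abs x : le x (ab x).
Proof. apply join_ub_l. Qed.
Lemma norm_le x y : le zero x -> le x y -> norm x <= norm y.
Proof. intros H1 H2. apply norm_mono. fold (ab x) (ab y). rewrite (abs_of_nonneg x H1),
  (abs_of_nonneg y (le_trans _ _ _ H1 H2)). exact H2. Qed.
Lemma norm_abs_le x y : le (ab x) (ab y) -> norm x <= norm y.
Proof. apply norm_mono. Qed.

Lemma meet_add_le x y z : le zero x -> le zero y -> le zero z ->
  le (meet x (add y z)) (add (meet x y) (meet x z)).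
Proof. intros Hx Hy Hz. set (m := meet x (add y z)).
  assert (H1 : le m (add (meet x y) z)).
  { assert (H : le (add m (opp z)) (meet x y)).
    { apply meet_glb.
      - apply le_trans with (add m zero). apply le_add_l. rewrite <- opp_zero. apply le_opp, Hz.
        rewrite add_zero_r. apply meet_lb_l.
      - rewrite <- (add_sub y z). apply le_add. apply meet_lb_r. }
    apply (le_add _ _ z) in H. rewrite add_sub2 in H. exact H. }
  assert (H2 : le m (add (meet x y) x)).
  { apply le_trans with x. apply meet_lb_l. rewrite <- (add_zero_l x) at 1. apply le_add.
    apply meet_glb; auto. }
  rewrite (meet_comm x z), meet_add_l. apply meet_glb; auto. Qed.

Lemma disj_le u v : meet (ab u) (ab v) = zero -> le (ab u) (ab (add u v)).
Proof. intro H.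
  assert (H1 : le (ab u) (add (ab (add u v)) (ab v))).
  { rewrite <- (add_sub u v) at 1. rewrite <- (abs_opp v). apply abs_tri. }
  apply le_trans with (meet (ab u) (add (ab (add u v)) (ab v))).
  { apply meet_glb. apply le_refl. exact H1. }
  apply le_trans with (add (meet (ab u) (ab (add u v))) (meet (ab u) (ab v))).
  apply meet_add_le; apply abs_nonneg.
  rewrite H, add_zero_r. apply meet_lb_r. Qed.

Lemma meet_scal0 p q t : le zero p -> le zero q -> meet p q = zero -> 0 <= t ->
  meet p (scal t q) = zero.
Proof. intros Hp Hq H Ht. apply le_antisym.
  - apply le_trans with (meet (scal (1+t) p) (scal (1+t) q)).
    apply meet_mono. rewrite <- (scal_one p) at 1. apply le_scal_r; auto; lra.
    apply le_scal_r; auto; lra.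
    rewrite <- scal_meet by lra. rewrite H, scal_zero_r. apply le_refl.
  - apply meet_glb; auto. apply le_scal_nonneg; auto. Qed.

Lemma add_join_meet x y : add x y = add (join x y) (meet x y).
Proof.
  set (M := meet (opp x) (opp y)).
  assert (H : add M (add x y) = meet x y).
  { unfold M. rewrite meet_add. rewrite add_assoc, add_opp_l, add_zero_l.
    rewrite (add_comm x y), add_assoc, add_opp_l, add_zero_l. apply meet_comm. }
  assert (H2 : join x y = opp M).
  { unfold M. rewrite opp_meet, !opp_opp. reflexivity. }
  rewrite <- H, H2, add_assoc, add_opp_l, add_zero_l. reflexivity. Qed.

Definition ppart x := join x zero.
Definition npart x := join (opp x) zero.
Lemma pos_nonneg x : le zero (ppart x). Proof. apply join_ub_r. Qed.
Lemma neg_nonneg x : le zero (npart x). Proof. apply join_ub_r. Qed.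
Lemma meet0_neg x : meet x zero = opp (npart x).
Proof. unfold npart. rewrite opp_join, opp_opp, opp_zero. reflexivity. Qed.
Lemma pos_neg_decomp x : x = add (ppart x) (opp (npart x)).
Proof. rewrite <- meet0_neg. unfold ppart. rewrite <- add_join_meet, add_zero_r. reflexivity. Qed.
Lemma pos_neg_disj x : meet (ppart x) (npart x) = zero.
Proof. apply (add_cancel_r _ _ (opp (npart x))). rewrite meet_add, <- pos_neg_decomp, add_opp_r, add_zero_l.
  apply meet0_neg. Qed.

Lemma archimedean a x : le zero a -> (forall eps, eps > 0 -> le x (scal eps a)) -> le x zero.
Proof. intros Ha H.
  assert (Hp : forall eps, eps > 0 -> norm (ppart x) <= eps * norm a).
  { intros eps He. rewrite <- (Rabs_right eps) by lra. rewrite <- norm_scal. apply norm_le.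
    apply pos_nonneg. apply join_lub. apply H, He. apply le_scal_nonneg; auto; lra. }
  assert (Hz : norm (ppart x) = 0).
  { pose proof (norm_nonneg (ppart x)). pose proof (norm_nonneg a).
    destruct (Rle_dec (norm (ppart x)) 0). lra.
    assert (0 < norm (ppart x) / (2 * (norm a + 1))).
    { apply Rdiv_lt_0_compat; lra. }
    specialize (Hp _ H2).
    assert (norm (ppart x) / (2 * (norm a + 1)) * norm a < norm (ppart x)).
    { apply Rlt_le_trans with (norm (ppart x) / (2 * (norm a + 1)) * (2 * (norm a + 1))).
      apply Rmult_lt_compat_l. exact H2. lra. unfold Rdiv. rewrite Rmult_assoc, Rinv_l by lra. lra. }
    lra. }
  apply norm_zero_iff in Hz. apply le_trans with (ppart x). apply join_ub_l. rewrite Hz. apply le_refl. Qed.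
End L.

Section At.
Context {X : BanachLattice}.
Local Notation ab := (absv X).
Implicit Types x y z u v w p q k e : X.
Variable a : X.
Hypothesis Ha0 : le zero a.
Hypothesis Hanz : a <> zero.
Hypothesis Hna : norm a = 1.
Hypothesis Hat : forall v, le zero v /\ le v a -> exists lam, 0 <= lam <= 1 /\ v = scal lam a.

Lemma ta_nonneg t : 0 <= t -> le zero (scal t a).
Proof. intro; apply le_scal_nonneg; auto. Qed.
Lemma abs_ta t : 0 <= t -> ab (scal t a) = scal t a.
Proof. intro; apply abs_of_nonneg, ta_nonneg; auto. Qed.
Lemma abs_a : ab a = a.
Proof. apply abs_of_nonneg, Ha0. Qed.
Lemma norm_ta t : 0 <= t -> norm (scal t a) = t.
Proof. intro. rewrite norm_scal, Hna, Rabs_right by lra. ring. Qed.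
Lemma ta_zero t : scal t a = zero -> t = 0.
Proof. intro H. destruct (Req_dec t 0); auto. exfalso. apply Hanz.
  rewrite <- (scal_inv_l t a) by auto. rewrite H, scal_zero_r. reflexivity. Qed.
Lemma le_ta_zero t : 0 <= t -> le (scal t a) zero -> t = 0.
Proof. intros Ht H. apply ta_zero, le_antisym; auto. apply ta_nonneg, Ht. Qed.
Lemma D_le_norm z t : 0 <= t -> le (scal t a) (ab z) -> t <= norm z.
Proof. intros Ht H. rewrite <- (norm_ta t Ht). apply norm_mono. fold (ab (scal t a)).
  rewrite abs_ta; auto. Qed.

Lemma riesz t x y : 0 <= t -> le zero x -> le zero y -> le (scal t a) (add x y) ->
  exists s, 0 <= s <= t /\ le (scal s a) x /\ le (scal (t - s) a) y.
Proof. intros Ht Hx Hy H. destruct (Req_dec t 0) as [->|Hn].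
  - exists 0. rewrite Rminus_0_r, scal_zero_l. repeat split; auto; lra.
  - set (p := meet (scal t a) x).
    assert (Hp0 : le zero p) by (apply meet_glb; auto; apply ta_nonneg; auto).
    destruct (Hat (scal (/ t) p)) as [lam [Hl Hv]].
    { split. apply le_scal_nonneg; auto. left; apply Rinv_0_lt_compat; lra.
      rewrite <- (scal_inv_l t a) by auto. apply le_scal. left; apply Rinv_0_lt_compat; lra.
      apply meet_lb_l. }
    assert (Hpe : p = scal (t * lam) a).
    { rewrite <- scal_assoc, <- Hv, scal_inv_r by auto. reflexivity. }
    exists (t * lam). split. split. apply Rmult_le_pos; lra.
    rewrite <- (Rmult_1_r t) at 2. apply Rmult_le_compat_l; lra.
    split. rewrite <- Hpe. apply meet_lb_r.
    assert (Hq : scal (t - t * lam) a = add (scal t a) (opp p)).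
    { rewrite Hpe, <- scal_opp_l, <- scal_add_distr_r. f_equal; ring. }
    rewrite Hq. apply le_sub0_inv.
    assert (H2 : le (scal t a) (add p y)).
    { unfold p. rewrite meet_add. apply meet_glb; auto.
      rewrite <- (add_zero_r (scal t a)) at 1. apply le_add_l, Hy. }
    apply le_sub0 in H2. rewrite opp_add, opp_opp, (add_comm (opp (scal t a)) p), add_assoc,
      (add_comm y p). exact H2.
Qed.

Lemma disj_coef u v r1 r2 : meet (ab u) (ab v) = zero -> 0 <= r1 -> 0 <= r2 ->
  le (scal r1 a) (ab u) -> le (scal r2 a) (ab v) -> r1 = 0 \/ r2 = 0.
Proof. intros H H1 H2 Hu Hv. set (m := Rmin r1 r2).
  assert (m = 0).
  { apply le_ta_zero. unfold m; apply Rmin_glb; auto. rewrite <- H. apply meet_glb.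
    - apply le_trans with (scal r1 a); auto. apply le_scal_r; auto. apply Rmin_l.
    - apply le_trans with (scal r2 a); auto. apply le_scal_r; auto. apply Rmin_r. }
  unfold m in H0. unfold Rmin in H0. destruct (Rle_dec r1 r2); lra. Qed.

Definition Kp k := meet (ab k) a = zero.

Lemma K_coef k r : Kp k -> 0 <= r -> le (scal r a) (ab k) -> r = 0.
Proof. intros Hk Hr H. set (m := Rmin r 1).
  assert (m = 0).
  { apply le_ta_zero. unfold m; apply Rmin_glb; lra. rewrite <- Hk. apply meet_glb.
    - apply le_trans with (scal r a); auto. apply le_scal_r; auto. apply Rmin_l.
    - rewrite <- (scal_one a) at 2. apply le_scal_r; auto. apply Rmin_r. }
  unfold m, Rmin in H0. destruct (Rle_dec r 1); lra. Qed.
Lemma K_add k1 k2 : Kp k1 -> Kp k2 -> Kp (add k1 k2).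
Proof. unfold Kp. intros H1 H2. apply le_antisym.
  - apply le_trans with (meet (add (ab k1) (ab k2)) a). apply meet_mono. apply abs_tri. apply le_refl.
    rewrite meet_comm, <- (add_zero_r zero), <- H1 at 1. rewrite <- H2, !(meet_comm _ a).
    apply meet_add_le; auto; apply abs_nonneg.
  - apply meet_glb; auto. apply abs_nonneg. Qed.
Lemma K_scal t k : Kp k -> Kp (scal t k).
Proof. unfold Kp. intro H. rewrite abs_scal, meet_comm. apply meet_scal0; auto.
  apply abs_nonneg. rewrite meet_comm; auto. apply Rabs_pos. Qed.
Lemma K_zero : Kp zero.
Proof. unfold Kp. rewrite abs_zero. apply meet_of_le, Ha0. Qed.
Lemma K_norm k t : Kp k -> norm k <= norm (add k (scal t a)).
Proof. intro H. apply norm_mono. apply disj_le. rewrite abs_scal, abs_a.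
  apply meet_scal0; auto. apply abs_nonneg. apply Rabs_pos. Qed.
Lemma K_disj_a w : Kp w -> meet (ab a) (ab w) = zero.
Proof. intro H. rewrite abs_a, meet_comm. exact H. Qed.

Lemma proj u : le zero u -> exists mu, 0 <= mu /\ le (scal mu a) u /\
  Kp (add u (opp (scal mu a))).
Proof. intro Hu.
  set (E := fun t => 0 <= t /\ le (scal t a) u).
  assert (Hb : bound E).
  { exists (norm u). intros t [Ht H]. apply D_le_norm; auto. rewrite abs_of_nonneg; auto. }
  assert (He : exists t, E t).
  { exists 0. split. lra. rewrite scal_zero_l. exact Hu. }
  destruct (completeness E Hb He) as [mu [Hub Hlub]].
  assert (Hmu : 0 <= mu) by (apply Hub; split; [lra| rewrite scal_zero_l; exact Hu]).
  assert (Hle : le (scal mu a) u).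
  { assert (H : le (add (scal mu a) (opp u)) zero).
    { apply (archimedean a); auto. intros eps Heps.
      assert (Ht : exists t, E t /\ mu - eps < t).
      { apply NNPP. intro Hc. assert (mu <= mu - eps). apply Hlub. intros t Et.
        apply Rnot_lt_le. intro. apply Hc. exists t. auto. lra. }
      destruct Ht as [t [[Ht0 Ht] Hlt]].
      assert (t <= mu) by (apply Hub; split; auto).
      apply le_trans with (add (scal mu a) (opp (scal t a))).
      apply le_add_l, le_opp, Ht.
      rewrite <- scal_opp_l, <- scal_add_distr_r. apply le_scal_r; auto. lra. }
    apply (le_add _ _ u) in H. rewrite add_sub2, add_zero_l in H. exact H. }
  exists mu. split; auto. split; auto.
  set (r := add u (opp (scal mu a))).
  assert (Hr : le zero r) by (apply le_sub0, Hle).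
  unfold Kp. rewrite abs_of_nonneg by exact Hr.
  destruct (Hat (meet r a)) as [nu [Hnu Heq]].
  { split. apply meet_glb; auto. apply meet_lb_r. }
  destruct (Req_dec nu 0) as [->|Hn].
  { rewrite Heq, scal_zero_l. reflexivity. }
  exfalso.
  assert (E (mu + nu)).
  { split. lra. rewrite scal_add_distr_r. rewrite <- (add_sub2 u (scal mu a)).
    rewrite (add_comm (scal mu a)). fold r. apply le_add. rewrite <- Heq. apply meet_lb_l. }
  apply Hub in H. lra.
Qed.
End At.

Section Iso.
Context {X : BanachLattice}.
Local Notation ab := (absv X).
Implicit Types x y z u v w p q k e : X.

Lemma lin_zero T : is_linear X T -> T zero = zero.
Proof. intros [_ H]. rewrite <- (scal_zero_l zero), H, !scal_zero_l. reflexivity. Qed.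
Lemma lin_opp T x : is_linear X T -> T (opp x) = opp (T x).
Proof. intros [_ H]. rewrite <- !scal_m1, H. reflexivity. Qed.
Lemma iso_inj T x y : surj_lin_isometry X T -> T x = T y -> x = y.
Proof. intros [Hl [_ Hn]] H.
  assert (norm (add x (opp y)) = 0).
  { rewrite <- Hn. destruct Hl as [Ha Hs]. rewrite Ha, lin_opp, H, add_opp_r by (split; auto).
    apply norm_zero. }
  apply norm_zero_iff in H0. apply (add_cancel_r _ _ (opp y)). rewrite H0, add_opp_r. reflexivity. Qed.
Lemma iso_inv T : surj_lin_isometry X T -> exists g, surj_lin_isometry X g /\ forall y, T (g y) = y.
Proof. intro HT. pose proof HT as [[Ha Hs] [Hsurj Hn]].
  set (g := fun y => proj1_sig (constructive_indefinite_description _ (Hsurj y))).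
  assert (Hg : forall y, T (g y) = y) by (intro y; unfold g; destruct constructive_indefinite_description; auto).
  exists g. split; auto. split; [split|split].
  - intros x y. apply (iso_inj T); auto. rewrite Ha, !Hg. reflexivity.
  - intros c x. apply (iso_inj T); auto. rewrite Hs, !Hg. reflexivity.
  - intros y. exists (T y). apply (iso_inj T); auto.
  - intros x. rewrite <- Hn, Hg. reflexivity. Qed.
Lemma opp_iso T : surj_lin_isometry X T -> surj_lin_isometry X (fun x => opp (T x)).
Proof. intros [[Ha Hs] [Hsurj Hn]]. split; [split|split].
  - intros x y. rewrite Ha, opp_add. reflexivity.
  - intros c x. rewrite Hs, scal_opp_r. reflexivity.
  - intros y. destruct (Hsurj (opp y)) as [x Hx]. exists x. rewrite Hx, opp_opp. reflexivity.
  - intros x. rewrite norm_opp. apply Hn. Qed.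
End Iso.

Section Main.
Context {X : BanachLattice}.
Local Notation ab := (absv X).
Implicit Types x y z u v w p q k e : X.
Variable a : X.
Hypothesis Ha0 : le zero a.
Hypothesis Hanz : a <> zero.
Hypothesis Hna : norm a = 1.
Hypothesis Hat : forall v, le zero v /\ le v a -> exists lam, 0 <= lam <= 1 /\ v = scal lam a.
Hypothesis Hdp : forall T : X -> X, surj_lin_isometry X T -> disjointness_preserving X T.

Lemma a_indec p q : add p q = a -> meet (ab p) (ab q) = zero -> p = zero \/ q = zero.
Proof. intros H Hd.
  assert (H1 : le (ab p) a) by (rewrite <- (abs_a a Ha0), <- H; apply disj_le, Hd).
  assert (H2 : le (ab q) a).
  { rewrite <- (abs_a a Ha0), <- H, add_comm. apply disj_le. rewrite meet_comm; exact Hd. }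
  destruct (Hat (ab p)) as [l1 [Hl1 E1]]. split; auto. apply abs_nonneg.
  destruct (Hat (ab q)) as [l2 [Hl2 E2]]. split; auto. apply abs_nonneg.
  destruct (disj_coef a Ha0 Hanz p q l1 l2 Hd) as [->| ->]; try lra.
  rewrite E1; apply le_refl. rewrite E2; apply le_refl.
  left. apply abs_zero_inv. rewrite E1, scal_zero_l. reflexivity.
  right. apply abs_zero_inv. rewrite E2, scal_zero_l. reflexivity. Qed.

Lemma T_indec T p q : surj_lin_isometry X T -> add p q = T a ->
  meet (ab p) (ab q) = zero -> p = zero \/ q = zero.
Proof. intros HT H Hd. destruct (iso_inv T HT) as [g [Hg HTg]].
  assert (Hga : g (T a) = a) by (apply (iso_inj T); auto).
  destruct (a_indec (g p) (g q)) as [E|E].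
  - destruct Hg as [[Ha _] _]. rewrite <- Ha, H. exact Hga.
  - apply (Hdp g Hg). exact Hd.
  - left. rewrite <- (HTg p), E. apply lin_zero. apply HT.
  - right. rewrite <- (HTg q), E. apply lin_zero. apply HT. Qed.

Lemma pos_case T : surj_lin_isometry X T -> le zero (T a) -> T a = a \/ Kp a (T a).
Proof. intros HT Hu. destruct (proj a Ha0 Hna Hat (T a) Hu) as [mu [Hmu [Hle Hk]]].
  set (r := add (T a) (opp (scal mu a))) in *.
  assert (Hr : le zero r) by (apply le_sub0, Hle).
  destruct (T_indec T r (scal mu a) HT) as [E|E].
  - unfold r. apply add_sub2.
  - rewrite abs_ta by auto. apply meet_scal0; auto. apply abs_nonneg.
  - left. assert (HTa : T a = scal mu a).
    { apply (add_cancel_r _ _ (opp (scal mu a))). fold r. rewrite E, add_opp_r. reflexivity. }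
    assert (mu = 1).
    { destruct HT as [_ [_ Hn]]. rewrite <- (norm_ta a Hna mu Hmu), <- HTa, Hn. exact Hna. }
    rewrite HTa, H, scal_one. reflexivity.
  - right. assert (T a = r) by (unfold r; rewrite E, opp_zero, add_zero_r; reflexivity).
    rewrite H. exact Hk. Qed.

Lemma orbit_a T : surj_lin_isometry X T -> T a = a \/ T a = opp a \/ Kp a (T a).
Proof. intro HT. set (u := T a).
  destruct (T_indec T (ppart u) (opp (npart u)) HT) as [E|E].
  - symmetry; apply pos_neg_decomp.
  - rewrite abs_opp, !abs_of_nonneg by (apply pos_nonneg || apply neg_nonneg). apply pos_neg_disj.
  -
    assert (Hu : u = opp (npart u)) by (rewrite (pos_neg_decomp u) at 1; rewrite E, add_zero_l; reflexivity).
    destruct (pos_case (fun x => opp (T x)) (opp_iso T HT)) as [H|H].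
    + fold u. rewrite Hu, opp_opp. apply neg_nonneg.
    + right; left. fold u in H. rewrite <- H, opp_opp. reflexivity.
    + right; right. fold u in H. rewrite <- (opp_opp u), <- scal_m1. apply K_scal; auto.
  - assert (Hu : u = ppart u) by (rewrite (pos_neg_decomp u) at 1; rewrite E, add_zero_r; reflexivity).
    destruct (pos_case T HT) as [H|H].
    + fold u. rewrite Hu. apply pos_nonneg.
    + left; exact H.
    + right; right; exact H. Qed.
End Main.

Section Lists.
Context {X : BanachLattice}.
Local Notation ab := (absv X).
Implicit Types x y z u v w p q k e : X.
Variable a : X.
Hypothesis Ha0 : le zero a.
Hypothesis Hanz : a <> zero.
Hypothesis Hna : norm a = 1.
Hypothesis Hat : forall v, le zero v /\ le v a -> exists lam, 0 <= lam <= 1 /\ v = scal lam a.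

Lemma orbit_decomp (P : X -> Prop) :
  (forall v, P v -> (v = a \/ v = opp a \/ Kp a v) /\ norm v <= 1) ->
  forall l : list (R * X), (forall pr, In pr l -> 0 <= fst pr /\ P (snd pr)) ->
  exists s k, lin_comb X l = add (scal s a) k /\ Kp a k /\
     Rabs s + norm k <= fold_right Rplus 0 (map fst l).
Proof. intros HP l. induction l as [|[lam v] l IH]; intros Hl.
  - exists 0, zero. simpl. rewrite scal_zero_l, add_zero_l, Rabs_R0, norm_zero.
    split; auto. split. apply K_zero; auto. lra.
  - destruct IH as [s [k [E [Hk Hb]]]]. intros p Hp. apply Hl. right; exact Hp.
    destruct (Hl (lam, v)) as [Hlam HPv]. left; reflexivity. simpl in Hlam, HPv.
    destruct (HP v HPv) as [Hv Hnv].
    change (lin_comb X ((lam,v)::l)) with (add (scal lam v) (lin_comb X l)).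
    change (fold_right Rplus 0 (map fst ((lam,v)::l))) with (lam + fold_right Rplus 0 (map fst l)).
    rewrite E.
    destruct Hv as [->|[->|Hv]].
    + exists (lam + s), k. split. rewrite add_assoc, <- scal_add_distr_r. reflexivity.
      split; auto. pose proof (Rabs_triang lam s). rewrite (Rabs_right lam) in H by lra. lra.
    + exists (- lam + s), k. split. rewrite add_assoc, scal_opp_r, <- scal_opp_l, <- scal_add_distr_r.
      reflexivity.
      split; auto. pose proof (Rabs_triang (- lam) s). rewrite Rabs_Ropp, (Rabs_right lam) in H by lra. lra.
    + exists s, (add (scal lam v) k). split. apply add_swap.
      split. apply K_add; auto. apply K_scal; auto.
      pose proof (norm_triangle (scal lam v) k). rewrite norm_scal, Rabs_right in H by lra.
      assert (lam * norm v <= lam) by (rewrite <- (Rmult_1_r lam) at 2; apply Rmult_le_compat_l; lra).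
      lra.
Qed.

Lemma orbit_bound (P : X -> Prop) (B : R) : 0 <= B ->
  (forall v, P v -> forall r, 0 <= r -> le (scal r a) (ab v) -> r <= B) ->
  forall l : list (R * X), (forall pr, In pr l -> 0 <= fst pr /\ P (snd pr)) ->
  forall t, 0 <= t -> le (scal t a) (ab (lin_comb X l)) -> t <= B * fold_right Rplus 0 (map fst l).
Proof. intros HB HP l. induction l as [|[lam v] l IH]; intros Hl t Ht H.
  - simpl in *. rewrite abs_zero in H. apply (le_ta_zero a Ha0 Hanz t Ht) in H. lra.
  - destruct (Hl (lam, v)) as [Hlam HPv]. left; reflexivity. simpl in Hlam, HPv.
    change (lin_comb X ((lam,v)::l)) with (add (scal lam v) (lin_comb X l)) in H.
    change (fold_right Rplus 0 (map fst ((lam,v)::l))) with (lam + fold_right Rplus 0 (map fst l)).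
    destruct (riesz a Ha0 Hat t (ab (scal lam v)) (ab (lin_comb X l)) Ht) as [s [Hs [H1 H2]]].
    apply abs_nonneg. apply abs_nonneg. apply le_trans with (1 := H). apply abs_tri.
    assert (Hr : t - s <= B * fold_right Rplus 0 (map fst l)).
    { apply IH; auto. intros p Hp; apply Hl; right; exact Hp. lra. }
    assert (Hs2 : s <= lam * B).
    { rewrite abs_scal, Rabs_right in H1 by lra.
      destruct (Req_dec lam 0) as [->|Hn].
      - rewrite scal_zero_l in H1. apply (le_ta_zero a Ha0 Hanz s) in H1; lra.
      - assert (/ lam * s <= B).
        { apply (HP v HPv). apply Rmult_le_pos; [left; apply Rinv_0_lt_compat; lra|lra].
          apply (le_scal (/ lam)) in H1. rewrite scal_assoc, scal_inv_l in H1 by exact Hn. exact H1.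
          left; apply Rinv_0_lt_compat; lra. }
        apply (Rmult_le_compat_l lam) in H0; [|lra]. rewrite <- Rmult_assoc, Rinv_r, Rmult_1_l in H0 by exact Hn.
        lra. }
    nra.
Qed.
End Lists.

Lemma add4 {X : BanachLattice} (p1 p2 p3 p4 : X) :
  add (add p1 p2) (add p3 p4) = add (add p2 p4) (add p1 p3).
Proof. rewrite (add_comm p1 p2), <- (add_assoc p2 p1), (add_comm p3 p4), (add_swap p1 p4), add_assoc.
  reflexivity. Qed.

Theorem theorem4p2 (X : BanachLattice) :
  convex_transitive X ->
  (forall T : X -> X, surj_lin_isometry X T -> disjointness_preserving X T) ->
  (exists x : X, norm x = 1 /\ atom X x) ->
  one_dimensional X.
Proof.
  intros Hct Hdp [x [Hx1 [Hxnz Hxat]]].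
  set (a := absv X x).
  assert (Ha0 : le zero a) by apply abs_nonneg.
  assert (Hanz : a <> zero) by (intro H; apply Hxnz, abs_zero_inv, H).
  assert (Hna : norm a = 1) by (unfold a; rewrite norm_abs; exact Hx1).
  assert (Hat : forall v, le zero v /\ le v a -> exists lam, 0 <= lam <= 1 /\ v = scal lam a)
    by (intros v Hv; apply Hxat, Hv).
  clearbody a.
  destruct (classic (exists w, Kp a w /\ w <> zero)) as [[w0 [Hw0 Hw0nz]]|Hno].
  2:{ exists a. split; auto. intro z.
      assert (Hpr : forall u, le zero u -> exists mu, u = scal mu a).
      { intros u Hu. destruct (proj a Ha0 Hna Hat u Hu) as [mu [_ [_ Hk]]].
        exists mu. apply (add_cancel_r _ _ (opp (scal mu a))). rewrite add_opp_r.
        apply NNPP. intro Hne. apply Hno. eexists; split; [exact Hk| exact Hne]. }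
      destruct (Hpr _ (pos_nonneg z)) as [m1 E1]. destruct (Hpr _ (neg_nonneg z)) as [m2 E2].
      exists (m1 - m2). rewrite (pos_neg_decomp z), E1, E2, <- scal_opp_l, <- scal_add_distr_r.
      f_equal; ring. }
  assert (Hn0 : 0 < norm w0).
  { pose proof (norm_nonneg w0). destruct (Req_dec (norm w0) 0) as [H1|H1].
    apply norm_zero_iff in H1; contradiction. lra. }
  set (w := scal (/ norm w0) w0).
  assert (Hw : Kp a w) by (apply K_scal; auto).
  assert (Hnw : norm w = 1).
  { unfold w; rewrite norm_scal, Rabs_right by (left; apply Rinv_0_lt_compat; lra). field; lra. }
  clearbody w.
  set (n := norm (add a w)).
  assert (Hdaw : meet (absv X a) (absv X w) = zero) by (apply K_disj_a; auto).
  assert (Hn1 : 1 <= n) by (rewrite <- Hna; apply norm_mono, disj_le, Hdaw).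
  assert (Hin : 0 < / n) by (apply Rinv_0_lt_compat; lra).
  set (z := scal (/ n) (add a w)).
  assert (Hnz : norm z = 1).
  { unfold z; rewrite norm_scal, Rabs_right by lra. fold n. field; lra. }
  assert (Hz_lb : le (scal (/ n) a) (absv X z)).
  { unfold z. rewrite abs_scal, Rabs_right by lra. apply le_scal. lra.
    rewrite <- (abs_a a Ha0) at 1. apply disj_le, Hdaw. }
  assert (Hzdef : z = scal (/ n) (add a w)) by reflexivity.
  clearbody z.
  assert (Hst : forall eps, eps > 0 -> 2 * / n <= 1 + 2 * eps).
  { intros eps Heps.
    destruct ((proj2 (Hct a Hna z)) (Req_le _ _ Hnz) eps Heps) as [c [Hc He]].
    destruct Hc as [l [Hl [Hsum Hcl]]].
    destruct (orbit_decomp a Ha0 (fun v => exists T, surj_lin_isometry X T /\ v = T a)) with (l := l)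
      as [s [k [Ec [Hk Hb]]]].
    { intros v [T [HT ->]]. split. apply (orbit_a a Ha0 Hanz Hna Hat Hdp T HT).
      destruct HT as [_ [_ Hn]]. rewrite Hn, Hna; lra. }
    { exact Hl. }
    rewrite Hsum in Hb. rewrite <- Hcl in Ec.
    set (e := sub X z c) in *.
    assert (Hze : z = add (add (scal s a) e) k).
    { rewrite <- add_assoc, (add_comm e k), add_assoc, <- Ec. unfold e, sub.
      rewrite add_comm, add_sub2. reflexivity. }
    assert (Hi : / n <= Rabs s + norm e).
    { assert (H1 : le (scal (/ n) a) (add (absv X (add (scal s a) e)) (absv X k))).
      { apply le_trans with (1 := Hz_lb). rewrite Hze at 1. apply abs_tri. }
      destruct (riesz a Ha0 Hat (/ n) _ _ ltac:(lra) (abs_nonneg _) (abs_nonneg _) H1)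
        as [s1 [Hs1 [H2 H3]]].
      assert (/ n - s1 = 0) by (apply (K_coef a Ha0 Hanz k); auto; lra).
      assert (H4 : le (scal s1 a) (add (absv X (scal s a)) (absv X e)))
        by (apply le_trans with (1 := H2); apply abs_tri).
      destruct (riesz a Ha0 Hat s1 _ _ (proj1 Hs1) (abs_nonneg _) (abs_nonneg _) H4)
        as [s2 [Hs2 [H5 H6]]].
      apply (D_le_norm a Ha0 Hna) in H5; [|lra]. apply (D_le_norm a Ha0 Hna) in H6; [|lra].
      rewrite norm_scal, Hna in H5. lra. }
    set (u := add (scal (/ n) w) (opp k)).
    assert (Hu : Kp a u) by (apply (K_add a Ha0); [apply (K_scal a Ha0); auto | rewrite <- scal_m1; apply (K_scal a Ha0); auto]).
    assert (Heu : e = add u (scal (/ n - s) a)).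
    { unfold e, sub, u. rewrite Ec. unfold Rminus. rewrite scal_add_distr_r, scal_opp_l.
      rewrite Hzdef, scal_add_distr_l, opp_add. apply add4. }
    assert (Hnu : norm u < eps).
    { apply Rle_lt_trans with (norm e). rewrite Heu. apply K_norm; auto. exact He. }
    assert (Hwk : scal (/ n) w = add u k) by (unfold u; rewrite add_sub2; reflexivity).
    assert (Hii : / n <= norm u + norm k).
    { replace (/ n) with (norm (scal (/ n) w)). rewrite Hwk. apply norm_triangle.
      rewrite norm_scal, Hnw, Rabs_right by lra. ring. }
    lra. }
  assert (Hn2 : 2 <= n).
  { assert (H2n : 2 * / n <= 1).
    { apply Rnot_lt_le. intro Hlt. pose proof (Hst ((2 * / n - 1) / 4) ltac:(lra)). lra. }
    apply (Rmult_le_compat_l n) in H2n; [|lra]. rewrite <- Rmult_assoc, (Rmult_comm n 2), Rmult_assoc,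
      Rinv_r, Rmult_1_r, Rmult_1_r in H2n by lra. lra. }
  assert (Hcl : closure X (conv X (fun v => exists T, surj_lin_isometry X T /\ v = T z)) a)
    by (apply (Hct z Hnz a); lra).
  assert (HB : forall v, (exists T, surj_lin_isometry X T /\ v = T z) ->
            forall r, 0 <= r -> le (scal r a) (absv X v) -> r <= / n).
  { intros v [T [HT ->]] r Hr H.
    assert (HTz : T z = scal (/ n) (add (T a) (T w))).
    { pose proof HT as [[Ha Hs] _]. rewrite Hzdef, Hs, Ha. reflexivity. }
    rewrite HTz, abs_scal, Rabs_right in H by lra.
    apply (le_scal n) in H; [|lra]. rewrite !scal_assoc, Rinv_r, scal_one in H by lra.
    assert (H' : le (scal (n * r) a) (add (absv X (T a)) (absv X (T w))))
      by (apply le_trans with (1 := H); apply abs_tri).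
    destruct (riesz a Ha0 Hat (n * r) _ _ ltac:(nra) (abs_nonneg _) (abs_nonneg _) H')
      as [r1 [Hr1 [H1 H2]]].
    assert (Hd : meet (absv X (T a)) (absv X (T w)) = zero) by (apply (Hdp T HT); exact Hdaw).
    assert (Hn1' : norm (T a) = 1) by (destruct HT as [_ [_ Hn]]; rewrite Hn; exact Hna).
    assert (Hn2' : norm (T w) = 1) by (destruct HT as [_ [_ Hn]]; rewrite Hn; exact Hnw).
    pose proof (D_le_norm a Ha0 Hna _ r1 (proj1 Hr1) H1) as H1'.
    pose proof (D_le_norm a Ha0 Hna _ (n * r - r1) ltac:(lra) H2) as H2'.
    assert (Hnr : n * r <= 1).
    { destruct (disj_coef a Ha0 Hanz _ _ r1 (n * r - r1) Hd (proj1 Hr1) ltac:(lra) H1 H2) as [E|E]; lra. }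
    apply (Rmult_le_reg_l n); [lra|]. rewrite Rinv_r by lra. lra. }
  destruct (Hcl ((1 - / n) / 2)) as [c [[l [Hl [Hsum Hcleq]]] He]].
  { assert (/ n <= / 2) by (apply Rinv_le_contravar; lra). lra. }
  set (e := sub X a c) in *.
  assert (Hace : a = add c e) by (unfold e, sub; rewrite add_comm, add_sub2; reflexivity).
  assert (H1 : le (scal 1 a) (add (absv X c) (absv X e))).
  { rewrite scal_one. apply le_trans with (absv X a). apply le_abs.
    replace (absv X a) with (absv X (add c e)) by (rewrite <- Hace; reflexivity). apply abs_tri. }
  destruct (riesz a Ha0 Hat 1 _ _ ltac:(lra) (abs_nonneg _) (abs_nonneg _) H1) as [s [Hs [H2 H3]]].
  assert (Hs1 : s <= / n * 1).
  { rewrite <- Hsum. apply (orbit_bound a Ha0 Hanz Hat _ (/ n) ltac:(lra) HB l Hl s ltac:(lra)).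
    rewrite <- Hcleq. exact H2. }
  pose proof (D_le_norm a Ha0 Hna _ (1 - s) ltac:(lra) H3).
  assert (/ n <= / 2) by (apply Rinv_le_contravar; lra).
  lra.
Qed.
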